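(* Let $f:[0,1]\to\mathbb R$ be twice differentiable and suppose there exist constants $0<c_1<c_2$ with $c_1<|f''(x)|<c_2$ for all $x\in[0,1]$. Then $f$ satisfies the uniform nonlinearity (UN) condition.
   Context: For a positive integer $M$ and $k=0,\dots,M-1$ let $I_k=[k/M,(k+1)/M]$ and $m_k=\inf_{a,b\in\mathbb R}\max_{x\in I_k}|f(x)-ax-b|$. A function $f$ satisfies the UN condition if there exists $K>0$ such that for all sufficiently large $M$, $$M\max_{0\le k\le M-1}m_k^2\le K\sum_{k=0}^{M-1}m_k^2 .$$ *)

(* Defs.v *)
From Stdlib Require Import Reals.
From Coquelicot Require Import Coquelicot.
Open Scope R_scope.

Definition is_derive_01 (g : R -> R) (x l : R) : Prop :=
  filterlim (fun y => (g y - g x) / (y - x))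
    (within (fun y => 0 <= y <= 1 /\ y <> x) (locally x)) (locally l).

Definition in_Ik (M k : nat) (x : R) : Prop :=
  INR k / INR M <= x <= (INR k + 1) / INR M.

Definition dev (f : R -> R) (M k : nat) (a b : R) : Rbar :=
  Lub_Rbar (fun v => exists x, in_Ik M k x /\ v = Rabs (f x - a * x - b)).

Definition mk (f : R -> R) (M k : nat) : R :=
  real (Glb_Rbar (fun m => exists a b, dev f M k a b = Finite m)).

(* UN condition: exists K > 0 s.t. for all sufficiently large M,
   M * max_{0<=k<=M-1} m_k^2 <= K * sum_{k=0}^{M-1} m_k^2
   (the max is written out: the bound holds for every k <= M-1). *)
Definition UN (f : R -> R) : Prop :=
  exists K : R, 0 < K /\
  exists N : nat, forall M : nat, (N <= M)%nat -> (0 < M)%nat ->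
    forall k : nat, (k <= M - 1)%nat ->
      INR M * (mk f M k) ^ 2 <= K * sum_n (fun j => (mk f M j) ^ 2) (M - 1).

(* Main.v *)
Require Import Defs.
From Stdlib Require Import Reals Lra Lia.
From Coquelicot Require Import Coquelicot.
Open Scope R_scope.

Lemma deriv_ed g x l : is_derive_01 g x l -> forall eps, 0 < eps ->
  exists d, 0 < d /\ forall y, 0 <= y <= 1 -> y <> x -> Rabs (y - x) < d ->
   Rabs ((g y - g x) / (y - x) - l) < eps.
Proof.
  intros H eps He.
  assert (Hl : locally l (fun z => Rabs (z - l) < eps)).
  { exists (mkposreal eps He). intros z Hz. exact Hz. }
  specialize (H _ Hl). destruct H as [d Hd].
  exists d. split. apply cond_pos.
  intros y Hy Hyx Hyd. apply (Hd y). exact Hyd. split; assumption.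
Qed.

Definition clamp (y : R) := Rmax 0 (Rmin 1 y).

Lemma clamp_id y : 0 <= y <= 1 -> clamp y = y.
Proof. intros. unfold clamp, Rmax, Rmin. repeat destruct Rle_dec; lra. Qed.

Lemma clamp_in y : 0 <= clamp y <= 1.
Proof. unfold clamp, Rmax, Rmin. repeat destruct Rle_dec; lra. Qed.

Lemma clamp_close x y : 0 <= x <= 1 -> Rabs (clamp y - x) <= Rabs (y - x).
Proof. intros. unfold clamp, Rmax, Rmin. repeat destruct Rle_dec;
  unfold Rabs; repeat destruct Rcase_abs; lra. Qed.

Lemma lip_pt g x l : 0 <= x <= 1 -> is_derive_01 g x l ->
  exists d, 0 < d /\ forall y, 0 <= y <= 1 -> Rabs (y - x) < d ->
   Rabs (g y - g x) <= (Rabs l + 1) * Rabs (y - x).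
Proof.
  intros Hx H. destruct (deriv_ed g x l H 1 Rlt_0_1) as [d [Hd H1]].
  exists d; split; auto. intros y Hy Hyd.
  destruct (Req_dec y x) as [->|Hne].
  { replace (g x - g x) with 0 by ring. rewrite Rabs_R0.
    apply Rmult_le_pos. pose proof (Rabs_pos l); lra. apply Rabs_pos. }
  specialize (H1 y Hy Hne Hyd).
  assert (Hz : y - x <> 0) by lra.
  replace (g y - g x) with (((g y - g x) / (y - x) - l) * (y - x) + l * (y - x))
    by (field; auto).
  eapply Rle_trans. apply Rabs_triang. rewrite !Rabs_mult.
  pose proof (Rabs_pos (y - x)). nra.
Qed.

Lemma cont_clamp g x l : 0 <= x <= 1 -> is_derive_01 g x l ->
  continuity_pt (fun y => g (clamp y)) x.
Proof.
  intros Hx H. destruct (lip_pt g x l Hx H) as [d [Hd Hl]].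
  unfold continuity_pt, continue_in, limit1_in, limit_in. simpl.
  unfold R_dist. intros eps He.
  assert (HL : 0 < Rabs l + 1) by (pose proof (Rabs_pos l); lra).
  exists (Rmin d (eps / (Rabs l + 1))). split.
  { apply Rmin_pos; auto. apply Rdiv_lt_0_compat; auto. }
  intros y [_ Hy]. rewrite (clamp_id x Hx).
  pose proof (clamp_close x y Hx). pose proof (Rmin_l d (eps / (Rabs l + 1))).
  pose proof (Rmin_r d (eps / (Rabs l + 1))).
  assert (Hc : Rabs (clamp y - x) < d) by lra.
  specialize (Hl (clamp y) (clamp_in y) Hc).
  eapply Rle_lt_trans. exact Hl.
  assert (Rabs (clamp y - x) < eps / (Rabs l + 1)) by lra.
  apply (Rmult_lt_compat_l (Rabs l + 1)) in H3; auto.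
  replace ((Rabs l + 1) * (eps / (Rabs l + 1))) with eps in H3 by (field; lra).
  lra.
Qed.

Lemma deriv_int g G x l : 0 < x < 1 -> is_derive_01 g x l ->
  (forall y, 0 <= y <= 1 -> G y = g y) -> derivable_pt_lim G x l.
Proof.
  intros Hx H HG eps He.
  destruct (deriv_ed g x l H eps He) as [d [Hd H1]].
  assert (Hp : 0 < Rmin d (Rmin x (1 - x))) by
    (repeat apply Rmin_pos; lra).
  exists (mkposreal _ Hp). simpl. intros h Hh Hha.
  pose proof (Rmin_l d (Rmin x (1 - x))).
  pose proof (Rmin_r d (Rmin x (1 - x))).
  pose proof (Rmin_l x (1 - x)). pose proof (Rmin_r x (1 - x)).
  assert (Hb : - Rabs h <= h <= Rabs h) by (unfold Rabs; destruct Rcase_abs; lra).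
  assert (Hy : 0 <= x + h <= 1) by lra.
  rewrite HG by lra. rewrite HG by lra.
  replace h with ((x + h) - x) at 2 by ring.
  apply H1; auto. lra. replace (x + h - x) with h by ring. lra.
Qed.

Lemma MVT01 g g' a b : 0 <= a <= 1 -> 0 <= b <= 1 ->
  (forall x, 0 <= x <= 1 -> is_derive_01 g x (g' x)) ->
  exists c, (a <= c <= b \/ b <= c <= a) /\ g b - g a = g' c * (b - a).
Proof.
  intros Ha Hb H.
  destruct (MVT_gen (fun y => g (clamp y)) a b g') as [c [Hc E]].
  - intros x Hx. apply is_derive_Reals. apply (deriv_int g).
    + unfold Rmin, Rmax in Hx; destruct Rle_dec; lra.
    + apply H. unfold Rmin, Rmax in Hx; destruct Rle_dec; lra.
    + intros; rewrite clamp_id; auto.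
  - intros x Hx. apply (cont_clamp g x (g' x)).
    unfold Rmin, Rmax in Hx; destruct Rle_dec; lra.
    apply H. unfold Rmin, Rmax in Hx; destruct Rle_dec; lra.
  - exists c. rewrite !clamp_id in E by auto. split; auto.
    unfold Rmin, Rmax in Hc; destruct Rle_dec; lra.
Qed.

Lemma second_diff f f' f'' m s :
  (forall x, 0 <= x <= 1 -> is_derive_01 f x (f' x)) ->
  (forall x, 0 <= x <= 1 -> is_derive_01 f' x (f'' x)) ->
  0 < s -> 0 < m - s -> m + s < 1 ->
  exists xi, 0 <= xi <= 1 /\ f (m + s) + f (m - s) - 2 * f m = s ^ 2 * f'' xi.
Proof.
  intros Hf Hf' Hs H1 H2.
  set (psi := f (m + s) + f (m - s) - 2 * f m).
  assert (Dint : forall x, 0 < x < 1 -> is_derive f x (f' x)).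
  { intros x Hx. apply is_derive_Reals. apply (deriv_int f); auto.
    apply Hf; lra. }
  assert (Dint' : forall x, 0 < x < 1 -> derivable_pt_lim f' x (f'' x)).
  { intros x Hx. apply (deriv_int f'); auto. apply Hf'; lra. }
  destruct (MVT_cor2 (fun t => (f (m + t) + f (m - t) - 2 * f m) * s ^ 2 - psi * t ^ 2)
     (fun t => (f' (m + t) - f' (m - t)) * s ^ 2 - psi * (2 * t)) 0 s Hs)
    as [c [Ec Hc]].
  { intros t Ht. apply is_derive_Reals.
    assert (A1 : is_derive (fun t => f (m + t)) t (f' (m + t))).
    { eapply is_derive_ext. intros; reflexivity.
      replace (f' (m + t)) with (scal 1 (f' (m + t))) by (unfold scal; simpl; unfold mult; simpl; ring).
      apply (is_derive_comp f (fun t => m + t)). apply Dint; lra.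
      auto_derive; auto; ring. }
    assert (A2 : is_derive (fun t => f (m - t)) t (- f' (m - t))).
    { replace (- f' (m - t)) with (scal (-1) (f' (m - t))).
      apply (is_derive_comp f (fun t => m - t)). apply Dint; lra.
      auto_derive; auto; ring.
      unfold scal; simpl; unfold mult; simpl; ring. }
    assert (A3 : is_derive (fun t => t ^ 2) t (2 * t)).
    { auto_derive; auto; ring. }
    auto_derive.
    { repeat split; [exists (f' (m + t)); apply Dint; lra | exists (f' (m - t)); apply Dint; lra]. }
    change (fun x : R => f x) with f.
    rewrite (is_derive_unique _ _ _ (Dint (m + t) ltac:(lra))).
    replace (m + - t) with (m - t) by ring.
    rewrite (is_derive_unique _ _ _ (Dint (m - t) ltac:(lra))).
    ring. }
  assert (Hh : (f' (m + c) - f' (m - c)) * s ^ 2 = psi * (2 * c)).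
  { replace (m + 0) with m in Ec by ring. replace (m - 0) with m in Ec by ring.
    unfold psi in Ec |- *. apply Rmult_eq_reg_r with s; [|lra]. nra. }
  destruct (MVT_cor2 f' f'' (m - c) (m + c)) as [xi [Ex Hx]]. lra.
  { intros; apply Dint'; lra. }
  exists xi. split. lra.
  fold psi. rewrite Ex in Hh.
  apply Rmult_eq_reg_r with (2 * c); [|lra]. nra.
Qed.

Lemma taylor_ub f f' f'' c2 x m :
  (forall x, 0 <= x <= 1 -> is_derive_01 f x (f' x)) ->
  (forall x, 0 <= x <= 1 -> is_derive_01 f' x (f'' x)) ->
  (forall x, 0 <= x <= 1 -> Rabs (f'' x) < c2) ->
  0 <= x <= 1 -> 0 <= m <= 1 ->
  Rabs (f x - f m - f' m * (x - m)) <= c2 * (x - m) ^ 2.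
Proof.
  intros Hf Hf' Hb Hx Hm.
  destruct (MVT01 f f' m x Hm Hx Hf) as [c [Hc Ec]].
  assert (Hc01 : 0 <= c <= 1) by lra.
  destruct (MVT01 f' f'' m c Hm Hc01 Hf') as [xi [Hxi Exi]].
  replace (f x - f m - f' m * (x - m)) with (f'' xi * (c - m) * (x - m))
    by (rewrite <- Exi; lra).
  rewrite !Rabs_mult.
  assert (Rabs (c - m) <= Rabs (x - m)) by
    (unfold Rabs; repeat destruct Rcase_abs; lra).
  specialize (Hb xi ltac:(lra)).
  pose proof (Rabs_pos (c - m)). pose proof (Rabs_pos (x - m)).
  pose proof (Rabs_pos (f'' xi)).
  replace ((x - m) ^ 2) with (Rabs (x - m) * Rabs (x - m)).
  2:{ rewrite <- Rabs_mult. rewrite Rabs_pos_eq. ring. nra. }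
  assert (Rabs (f'' xi) * Rabs (c - m) <= c2 * Rabs (x - m)) by nra.
  nra.
Qed.

Lemma dev_ub f M k A B U : (0 < M)%nat ->
  (forall x, in_Ik M k x -> Rabs (f x - A * x - B) <= U) ->
  exists m, dev f M k A B = Finite m /\ m <= U.
Proof.
  intros HM H. unfold dev.
  destruct (Lub_Rbar_correct (fun v => exists x, in_Ik M k x /\ v = Rabs (f x - A * x - B))) as [Hub Hl].
  assert (HU : Rbar_le (Lub_Rbar (fun v => exists x, in_Ik M k x /\ v = Rabs (f x - A * x - B))) (Finite U)).
  { apply Hl. intros v [x [Hx ->]]. simpl. auto. }
  assert (Hin : in_Ik M k (INR k / INR M)).
  { assert (0 < INR M) by (apply lt_0_INR; lia). unfold in_Ik. split. lra.
    unfold Rdiv. apply Rmult_le_compat_r. left; apply Rinv_0_lt_compat; auto. lra. }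
  assert (H0 := Hub _ (ex_intro _ _ (conj Hin eq_refl))).
  destruct (Lub_Rbar _) as [r| |]; simpl in *; try contradiction.
  exists r; auto.
Qed.

Lemma dev_pt f M k A B m x : dev f M k A B = Finite m -> in_Ik M k x ->
  Rabs (f x - A * x - B) <= m.
Proof.
  unfold dev. intros E Hx.
  destruct (Lub_Rbar_correct (fun v => exists x, in_Ik M k x /\ v = Rabs (f x - A * x - B))) as [Hub Hl].
  rewrite E in Hub. apply (Hub _ (ex_intro _ _ (conj Hx eq_refl))).
Qed.

Lemma mk_bounds f f' f'' c1 c2 M k :
  (forall x, 0 <= x <= 1 -> is_derive_01 f x (f' x)) ->
  (forall x, 0 <= x <= 1 -> is_derive_01 f' x (f'' x)) ->
  (forall x, 0 <= x <= 1 -> c1 < Rabs (f'' x) < c2) ->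
  (0 < M)%nat -> (k <= M - 1)%nat ->
  c1 / 64 * (/ INR M) ^ 2 <= mk f M k <= c2 * (/ INR M) ^ 2.
Proof.
  intros Hf Hf' Hb HM Hk.
  assert (HMp : 0 < INR M) by (apply lt_0_INR; lia).
  set (h := / INR M).
  assert (Hh : 0 < h) by (apply Rinv_0_lt_compat; auto).
  set (a := INR k / INR M).
  assert (Ha : 0 <= a) by (unfold a, Rdiv; apply Rmult_le_pos; [apply pos_INR | left; apply Rinv_0_lt_compat; lra]).
  assert (Hk1 : INR k + 1 <= INR M).
  { rewrite <- S_INR. apply le_INR. lia. }
  assert (Hb1 : a + h <= 1).
  { unfold a, h. replace (INR k / INR M + / INR M) with ((INR k + 1) / INR M) by (field; lra).
    apply (Rmult_le_reg_r (INR M)); auto. unfold Rdiv. rewrite Rmult_assoc, Rinv_l by lra. lra. }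
  assert (HI : forall x, in_Ik M k x <-> a <= x <= a + h).
  { intros x. unfold in_Ik. replace ((INR k + 1) / INR M) with (a + h).
    reflexivity. unfold a, h. field. lra. }
  set (p := a + h / 2).
  assert (Hp : 0 <= p <= 1) by (unfold p; lra).
  destruct (dev_ub f M k (f' p) (f p - f' p * p) (c2 * h ^ 2) HM) as [m0 [E0 Hm0]].
  { intros x Hx. apply HI in Hx.
    replace (f x - f' p * x - (f p - f' p * p)) with (f x - f p - f' p * (x - p)) by ring.
    eapply Rle_trans. apply (taylor_ub f f' f'' c2 x p); auto.
    intros y Hy; apply Hb; auto. lra.
    assert (Hc2 : 0 < c2). { assert (H0 := Hb 0 ltac:(lra)). pose proof (Rabs_pos (f'' 0)). lra. }
    apply Rmult_le_compat_l. lra. unfold p. nra. }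
  assert (Hlow : forall m, (exists A B, dev f M k A B = Finite m) -> c1 / 64 * h ^ 2 <= m).
  { intros m [A [B E]].
    destruct (second_diff f f' f'' p (h / 4) Hf Hf') as [xi [Hxi Exi]].
    lra. unfold p; lra. unfold p; lra.
    assert (B1 := dev_pt f M k A B m (p + h / 4) E ltac:(apply HI; unfold p; lra)).
    assert (B2 := dev_pt f M k A B m (p - h / 4) E ltac:(apply HI; unfold p; lra)).
    assert (B3 := dev_pt f M k A B m p E ltac:(apply HI; unfold p; lra)).
    assert (Hd : Rabs (f (p + h / 4) + f (p - h / 4) - 2 * f p) <= 4 * m).
    { replace (f (p + h / 4) + f (p - h / 4) - 2 * f p) with
        ((f (p + h / 4) - A * (p + h / 4) - B) + (f (p - h / 4) - A * (p - h / 4) - B)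
          + (-2) * (f p - A * p - B)) by ring.
      eapply Rle_trans. apply Rabs_triang.
      eapply Rle_trans. apply Rplus_le_compat_r. apply Rabs_triang.
      rewrite Rabs_mult. replace (Rabs (-2)) with 2. lra.
      rewrite Rabs_left by lra. ring. }
    rewrite Exi, Rabs_mult in Hd. rewrite Rabs_pos_eq in Hd by (apply pow_le; lra).
    assert (Hc := Hb xi Hxi). nra. }
  destruct (Glb_Rbar_correct (fun m => exists a b, dev f M k a b = Finite m)) as [Hlb Hg].
  assert (G1 : Rbar_le (Finite (c1 / 64 * h ^ 2)) (Glb_Rbar (fun m => exists a b, dev f M k a b = Finite m))).
  { apply Hg. intros v Hv. simpl. apply Hlow. auto. }
  assert (G2 := Hlb m0 (ex_intro _ _ (ex_intro _ _ E0))).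
  unfold mk. fold h.
  destruct (Glb_Rbar _) as [r| |]; simpl in *; try contradiction.
  lra.
Qed.

Theorem lemma3p3 (f f' f'' : R -> R) (c1 c2 : R) :
  (forall x, 0 <= x <= 1 -> is_derive_01 f x (f' x)) ->
  (forall x, 0 <= x <= 1 -> is_derive_01 f' x (f'' x)) ->
  0 < c1 -> c1 < c2 ->
  (forall x, 0 <= x <= 1 -> c1 < Rabs (f'' x) < c2) ->
  UN f.
Proof.
  intros Hf Hf' Hc1 Hc12 Hb.
  exists ((64 * c2 / c1) ^ 2). split.
  { apply pow_lt. apply Rdiv_lt_0_compat; lra. }
  exists 1%nat. intros M _ HM k Hk.
  assert (HMp : 0 < INR M) by (apply lt_0_INR; lia).
  set (h := / INR M).
  assert (Hh : 0 < h) by (apply Rinv_0_lt_compat; auto).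
  assert (Hsum : INR M * (c1 / 64 * h ^ 2) ^ 2 <= sum_n (fun j => mk f M j ^ 2) (M - 1)).
  { replace (INR M * (c1 / 64 * h ^ 2) ^ 2) with
      (sum_n (fun _ => (c1 / 64 * h ^ 2) ^ 2) (M - 1)).
    2:{ rewrite sum_n_const. f_equal. f_equal. lia. }
    rewrite !sum_n_Reals. apply sum_Rle. intros j Hj.
    destruct (mk_bounds f f' f'' c1 c2 M j Hf Hf' Hb HM Hj) as [L U].
    fold h in L. assert (0 < c1 / 64 * h ^ 2) by (apply Rmult_lt_0_compat; [lra | apply pow_lt; lra]).
    apply pow_incr. lra. }
  destruct (mk_bounds f f' f'' c1 c2 M k Hf Hf' Hb HM Hk) as [L U].
  fold h in L, U.
  assert (P : 0 < c1 / 64 * h ^ 2) by (apply Rmult_lt_0_compat; [lra | apply pow_lt; lra]).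
  assert (Hmk : mk f M k ^ 2 <= (c2 * h ^ 2) ^ 2) by (apply pow_incr; lra).
  apply Rle_trans with (INR M * (c2 * h ^ 2) ^ 2).
  { apply Rmult_le_compat_l; lra. }
  apply Rle_trans with ((64 * c2 / c1) ^ 2 * (INR M * (c1 / 64 * h ^ 2) ^ 2)).
  { right. field. lra. }
  apply Rmult_le_compat_l. apply pow_le. apply Rlt_le, Rdiv_lt_0_compat; lra.
  exact Hsum.
Qed.
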